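(* Let $\mathbb H=\mathbb{R}\times\mathbb{R}_{>0}$ and define $L:\mathbb H\to\mathbb{R}_{>0}$ by $L(a,b)=\frac32b+a$ if $\frac ab\ge-1$ and $L(a,b)=-\frac{b^2}{2a}$ if $\frac ab\le-1$. Then for all $v_1,v_2\in\mathbb H$, $L(v_1+v_2)\le L(v_1)+L(v_2)$, and $L(kv)=kL(v)$ for all $v\in\mathbb H$ and $k>0$. *)

(* Defs.v *)
From Stdlib Require Import Reals.
Open Scope R_scope.

Definition inH (v : R * R) : Prop := 0 < snd v.

(* L(a,b) = 3/2 b + a if a/b >= -1, and -b^2/(2a) if a/b <= -1.
   For b > 0, a/b >= -1 iff a >= -b; at a = -b both branches give b/2. *)
Definition L (v : R * R) : R :=
  let (a, b) := v in
  if Rle_dec (- b) a then 3 / 2 * b + a else - (b ^ 2) / (2 * a).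

Definition vadd (v w : R * R) : R * R := (fst v + fst w, snd v + snd w).
Definition vscale (k : R) (v : R * R) : R * R := (k * fst v, k * snd v).

(* Main.v *)
Require Import Defs.
From Stdlib Require Import Reals Lra Psatz.
Open Scope R_scope.

Lemma fdiv (a b : R) : a < 0 -> 2 * a * (- (b ^ 2) / (2 * a)) = - b ^ 2.
Proof. intros; field; lra. Qed.

Lemma Lspec (a b : R) : 0 < b ->
  (- b <= a /\ L (a, b) = 3 / 2 * b + a) \/
  (a < - b /\ 2 * a * L (a, b) = - b ^ 2).
Proof.
  intros Hb; unfold L; destruct (Rle_dec (- b) a).
  - left; auto.
  - right; split; [lra|]. apply fdiv; lra.
Qed.

Lemma tangent (p q : R) : 0 < q -> exists al be : R,
  al * p + be * q = L (p, q) /\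
  forall a b, 0 < b -> al * a + be * b <= L (a, b).
Proof.
  intros Hq. destruct (Lspec p q Hq) as [[H1 H2]|[H1 H2]].
  - exists 1, (3/2). split; [lra|].
    intros a b Hb. destruct (Lspec a b Hb) as [[G1 G2]|[G1 G2]]; [lra|].
    set (y := L (a, b)) in *.
    assert (Hy : 2 * a * (y - (a + 3/2*b)) = - ((2*a+b)*(a+b))) by nra.
    nra.
  - assert (Hp : p <> 0) by lra.
    set (r := q / p).
    assert (Hr : r * p = q) by (unfold r; field; auto).
    assert (Hr1 : -1 <= r < 0).
    { split; nra. }
    exists (r ^ 2 / 2), (- r). split.
    + apply Rmult_eq_reg_l with (2 * p); [|lra].
      rewrite H2, <- Hr; field.
    + intros a b Hb. destruct (Lspec a b Hb) as [[G1 G2]|[G1 G2]].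
      * rewrite G2.
        assert (0 <= (1 - r^2/2) * (a + b)) by (apply Rmult_le_pos; nra).
        assert (0 <= b * (1 + r)^2) by (apply Rmult_le_pos; nra).
        nra.
      * set (y := L (a, b)) in *.
        assert (Hy : 2 * a * (y - (r^2/2*a - r*b)) = - (b - r*a)^2) by nra.
        destruct (Rle_or_lt (r^2/2*a - r*b) y) as [W|W]; [lra|].
        assert (0 < (2 * a) * (y - (r^2/2*a - r*b))) by (apply Rmult_lt_0_compat_neg; lra) || nra.
        pose proof (pow2_ge_0 (b - r*a)). lra.
Qed.

Theorem lemma5p3 :
  (forall v1 v2 : R * R, inH v1 -> inH v2 ->
     L (vadd v1 v2) <= L v1 + L v2) /\
  (forall (v : R * R) (k : R), inH v -> 0 < k ->
     L (vscale k v) = k * L v).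
Proof.
  split.
  - intros [a1 b1] [a2 b2] H1 H2; unfold inH, vadd in *; simpl in *.
    destruct (tangent (a1 + a2) (b1 + b2)) as [al [be [E F]]]; [lra|].
    change (L (a1 + a2, b1 + b2) <= L (a1, b1) + L (a2, b2)).
    rewrite <- E. pose proof (F a1 b1 H1). pose proof (F a2 b2 H2). lra.
  - intros [a b] k Hb Hk; unfold inH, vscale, L in *; simpl in *.
    destruct (Rle_dec (- (k * b)) (k * a)); destruct (Rle_dec (- b) a).
    + ring.
    + exfalso; nra.
    + exfalso; nra.
    + field; nra.
Qed.
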